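(* Let $k\geq 1$ be an integer and let $B\in M_{4k+1}(\mathbb{F}_2)$ be a non-derogative matrix. Then there exist $N,D\in M_{4k+1}(\mathbb{F}_2)$ with $B=N+D$, $N^2=0$ and $D^4=D$.
   Context: A square matrix is non-derogative if its minimal polynomial equals its characteristic polynomial. $\mathbb{F}_2$ denotes the field with two elements. *)

(* Defs.v *)
From mathcomp Require Import all_boot all_order all_algebra.
Set Implicit Arguments. Unset Strict Implicit. Unset Printing Implicit Defensive.
Import GRing.Theory.
Local Open Scope ring_scope.

Definition non_derogative (F : fieldType) (n : nat) (A : 'M[F]_n.+1) : Prop :=
  mxminpoly A = char_poly A.

(* Main.v *)
Require Import Defs.
From mathcomp Require Import all_boot all_order all_algebra.
From mathcomp Require Import zify ring.
From Stdlib Require Import Classical.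
Set Implicit Arguments. Unset Strict Implicit. Unset Printing Implicit Defensive.
Import GRing.Theory.
Local Open Scope ring_scope.

Section Split.

Variable F : fieldType.

Lemma split_poly (a b : {poly F}) : a != 0 -> b != 0 ->
  exists a1 a2 b1 b2, [/\ a = a1 * a2, b = b1 * b2, coprimep a1 b1,
     a %| a1 * b1 & b %| a1 * b1].
Proof.
move=> a0 b0.
set g := gcdp a b.
have ha : a = (a %/ g) * g by rewrite divpK ?dvdp_gcdl.
have hb : b = (b %/ g) * g by rewrite divpK ?dvdp_gcdr.
set h := a %/ g in ha *; set kk := b %/ g in hb *.
have h0 : h != 0 by apply: contraNneq a0 => h0; rewrite ha h0 mul0r.
have chk : coprimep h kk by apply: coprimep_div_gcd; rewrite a0.
set c := gdcop h a.
have cA : c %| a := dvdp_gdco h a.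
have cH : coprimep c h := coprimep_gdco h a0.
have aC : a %| c * h ^+ size a := dvdp_gdcor a h0.
set b1 := gdcop h b.
have bB : b1 %| b := dvdp_gdco h b.
have bH : coprimep b1 h := coprimep_gdco h b0.
have bC : b %| b1 * h ^+ size b := dvdp_gdcor b h0.
case/dvdpP: cA => a1 ea.
case/dvdpP: bB => b2 eb.
have c0 : c != 0 by apply: contraNneq a0 => c0; rewrite ea c0 mulr0.
have b10 : b1 != 0 by apply: contraNneq b0 => e0; rewrite eb e0 mulr0.
have a1H : a1 %| h ^+ size a by rewrite -(@dvdp_mul2l _ c) // mulrC -ea.
have b2H : b2 %| h ^+ size b by rewrite -(@dvdp_mul2l _ b1) // mulrC -eb.
have cop : coprimep a1 b1.
  rewrite coprimep_sym; apply: coprimep_dvdl a1H _; exact: coprimep_expr.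
have cb2 : coprimep c b2 by apply: coprimep_dvdl b2H _; exact: coprimep_expr.
have b2g : b2 %| g.
  have : b2 %| kk * g by rewrite -hb eb dvdp_mulIl.
  have cop2 : coprimep b2 kk by apply: coprimep_dvdr b2H _; apply: coprimep_expl.
  by rewrite Gauss_dvdpr.
have b2a1 : b2 %| a1.
  have : b2 %| a1 * c by rewrite -ea (dvdp_trans b2g) ?dvdp_gcdl.
  by rewrite Gauss_dvdpl // coprimep_sym.
have cg : c %| g by rewrite -(Gauss_dvdpr _ cH) -ha /c dvdp_gdco.
have cb1 : c %| b1.
  have : c %| b2 * b1 by rewrite -eb (dvdp_trans cg) ?dvdp_gcdr.
  by rewrite Gauss_dvdpr.
exists a1, c, b1, b2; split => //.
- by rewrite mulrC.
- by rewrite ea; apply: dvdp_mul.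
- by rewrite eb; apply: dvdp_mul.
Qed.

End Split.

Section Ann.
Variables (F : fieldType) (n : nat) (A : 'M[F]_n.+1).

Definition annP (u : 'rV[F]_n.+1) (a : {poly F}) :=
  forall q, (u *m horner_mx A q == 0) = (a %| q).

Lemma hmxM (p q : {poly F}) : horner_mx A (p * q) = horner_mx A p *m horner_mx A q.
Proof. by rewrite rmorphM. Qed.

Lemma ann_dvd (u : 'rV[F]_n.+1) (a q : {poly F}) : a %| q -> u *m horner_mx A a = 0 -> u *m horner_mx A q = 0.
Proof.
case/dvdpP=> r ->; rewrite mulrC hmxM mulmxA => ->; exact: mul0mx.
Qed.

Lemma ann_exists (u : 'rV[F]_n.+1) : exists2 a, a != 0 & annP u a.
Proof.
suff main : forall s (q : {poly F}), (size q <= s)%N -> q != 0 -> u *m horner_mx A q = 0 ->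
    exists2 a, a != 0 & annP u a.
  apply: (main _ (mxminpoly A) (leqnn _)); first by rewrite monic_neq0 ?mxminpoly_monic.
  by rewrite mx_root_minpoly mulmx0.
elim=> [|s IH] q hs q0 hq.
  by move: q0; rewrite -size_poly_eq0; move: hs; case: (size q).
case: (classic (forall r, u *m horner_mx A r = 0 -> q %| r)) => [H|].
  exists q => //; move=> r; apply/idP/idP => [/eqP/H //|qr].
  by apply/eqP; apply: ann_dvd qr hq.
move=> H; have [r Hr] := not_all_ex_not _ _ H.
have [hr nqr] := imply_to_and _ _ Hr.
apply: (IH (r %% q)).
- by rewrite -ltnS (leq_trans _ hs) // ltn_modp.
- by apply/negP => /eqP/modp_eq0P.
- have er := divp_eq r q.
  have -> : r %% q = r - r %/ q * q by rewrite {2}er addrC addKr.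
  by rewrite rmorphB /= mulmxBr hr [r %/ q * q]mulrC hmxM mulmxA hq mul0mx subr0.
Qed.

Lemma annM u (a1 a2 : {poly F}) : a2 != 0 -> annP u (a1 * a2) ->
  annP (u *m horner_mx A a2) a1.
Proof.
move=> a20 H r; rewrite -mulmxA -hmxM H mulrC.
by rewrite dvdp_mul2l.
Qed.

Lemma annD u w (a b : {poly F}) : coprimep a b -> annP u a -> annP w b ->
  annP (u + w) (a * b).
Proof.
move=> cab Hu Hw r; rewrite mulmxDl Gauss_dvdp //.
apply/idP/idP => [/eqP H|/andP [ar br]]; last first.
  by move: ar br; rewrite -Hu -Hw => /eqP -> /eqP ->; rewrite addr0.
have eu : u *m horner_mx A r = - (w *m horner_mx A r).
  by apply/eqP; rewrite -subr_eq0 opprK H.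
apply/andP; split.
  rewrite -(Gauss_dvdpl _ cab) -Hu hmxM mulmxA eu mulNmx -mulmxA -hmxM mulrC.
  by rewrite oppr_eq0 Hw dvdp_mulIl.
have cba : coprimep b a by rewrite coprimep_sym.
have ew : w *m horner_mx A r = - (u *m horner_mx A r) by rewrite eu opprK.
rewrite -(Gauss_dvdpl _ cba) -Hw hmxM mulmxA ew mulNmx -mulmxA -hmxM mulrC.
by rewrite oppr_eq0 Hu dvdp_mulIl.
Qed.

Lemma lcm_vec u w (a b : {poly F}) : a != 0 -> b != 0 -> annP u a -> annP w b ->
  exists z c, [/\ c != 0, annP z c, a %| c & b %| c].
Proof.
move=> a0 b0 Hu Hw.
have [a1 [a2 [b1 [b2 [ea eb cop da db]]]]] := split_poly a0 b0.
have a20 : a2 != 0 by apply: contraNneq a0 => e; rewrite ea e mulr0.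
have b20 : b2 != 0 by apply: contraNneq b0 => e; rewrite eb e mulr0.
have a10 : a1 != 0 by apply: contraNneq a0 => e; rewrite ea e mul0r.
have b10 : b1 != 0 by apply: contraNneq b0 => e; rewrite eb e mul0r.
exists (u *m horner_mx A a2 + w *m horner_mx A b2), (a1 * b1); split => //.
- by rewrite mulf_neq0.
- apply: annD => //; apply: annM => //; [rewrite -ea | rewrite -eb] => //.
Qed.

Lemma ann_all : exists v a, [/\ a != 0, annP v a & horner_mx A a = 0].
Proof.
suff main : forall j, (j <= n.+1)%N -> exists v a, [/\ a != 0, annP v a &
   forall i : 'I_n.+1, (i < j)%N -> (delta_mx 0 i : 'rV_n.+1) *m horner_mx A a = 0].
  have [v [a [a0 Ha Hi]]] := main _ (leqnn _).
  exists v, a; split => //; apply/row_matrixP => i.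
  by rewrite rowE Hi // row0.
elim=> [|j IH] hj.
  exists 0, 1; split => //; first by rewrite oner_eq0.
  by move=> q; rewrite mul0mx eqxx dvd1p.
have [v [a [a0 Ha Hi]]] := IH (ltnW hj).
have [b b0 Hb] := ann_exists (delta_mx 0 (Ordinal hj) : 'rV_n.+1).
have [z [c [c0 Hz ac bc]]] := lcm_vec a0 b0 Ha Hb.
exists z, c; split => // i; rewrite ltnS leq_eqVlt => /orP [/eqP ei|lij].
  have -> : i = Ordinal hj by apply/val_inj.
  by apply: ann_dvd bc _; apply/eqP; rewrite Hb dvdpp.
by apply: ann_dvd ac _; apply: Hi.
Qed.

End Ann.

Definition dco (i j : nat) : bool :=
  match i with 0 => j == 1 | 1 => (j <= 1)%N | 2 => (j <= 3)%N | 3 => (j == 0) || (j == 2) | _ => false end.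
Definition nco (i j : nat) : bool :=
  match i with 0 => false | 1 => (j <= 2)%N | 2 => (j <= 2)%N | 3 => (j <= 2)%N || (j == 4) | _ => false end.
Definition mco (i j : nat) : bool :=
  match i with 0 => j == 1 | 1 => j == 2 | 2 => j == 3 | 3 => (j == 1) || (j == 4) | _ => false end.
Definition ico (i j : nat) : bool := (i == j) && (i < 4)%N.

Definition mk5 (f : nat -> nat -> bool) : 'M['F_2]_5 := \matrix_(i < 5, j < 5) (f i j)%:R.
Definition D5 := mk5 dco.
Definition N5 := mk5 nco.
Definition M5 := mk5 mco.
Definition I5 := mk5 ico.
Definition e5 (r : nat) : 'rV['F_2]_5 := \row_(j < 5) ((j : nat) == r)%:R.

Lemma oo : (1 + 1 : 'F_2) = 0. Proof. by apply/val_inj. Qed.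

Ltac conc := apply/matrixP; case=> [[|[|[|[|[|?]]]]] ?] //; case=> [[|[|[|[|[|?]]]]] ?] //;
  rewrite ?(mxE, big_ord_recl, big_ord0) /= ?(mul0r, mul1r, mulr0, mulr1, add0r, addr0, oo) //.
Ltac concv := apply/rowP; case=> [[|[|[|[|[|?]]]]] ?] //;
  rewrite ?(mxE, big_ord_recl, big_ord0) /= ?(mul0r, mul1r, mulr0, mulr1, add0r, addr0, oo) //.

Lemma N5sq : N5 *m N5 = 0. Proof. conc. Qed.
Lemma D5sq : D5 *m D5 = D5 + I5. Proof. conc. Qed.
Lemma D5q' : I5 *m (D5 + I5 + D5 + 1%:M) = 0. Proof. conc. Qed.
Lemma D5q : I5 *m (D5 *m D5 + D5 + 1%:M) = 0. Proof. by rewrite D5sq D5q'. Qed.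
Lemma DI5 : D5 *m I5 = D5. Proof. conc. Qed.
Lemma M5E : N5 + D5 = M5. Proof. conc. Qed.

Lemma e5I5 r : (r < 4)%N -> e5 r *m I5 = e5 r.
Proof. by case: r => [|[|[|[|r]]]] // _; concv. Qed.
Lemma e54I : e5 4 *m I5 = 0. Proof. concv. Qed.
Lemma e54D : e5 4 *m D5 = 0. Proof. concv. Qed.
Lemma e50N : e5 0 *m N5 = 0. Proof. concv. Qed.
Lemma e54N : e5 4 *m N5 = 0. Proof. concv. Qed.
Lemma eM0 : e5 0 *m M5 = e5 1. Proof. concv. Qed.
Lemma eM1 : e5 1 *m M5 = e5 2. Proof. concv. Qed.
Lemma eM2 : e5 2 *m M5 = e5 3. Proof. concv. Qed.
Lemma eM3 : e5 3 *m M5 = e5 1 + e5 4. Proof. concv. Qed.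

Lemma e5E (r : 'I_5) : e5 r = delta_mx 0 r.
Proof. by apply/rowP => j; rewrite !mxE eqxx. Qed.

Definition r1 : {poly 'F_2} := 'X^4 + 'X.
Definition pi (m : nat) : {poly 'F_2} := r1 ^+ (m %/ 4) * 'X^(m %% 4).

Lemma r1_monic : r1 \is monic.
Proof.
by rewrite monicE /r1 lead_coefDl ?size_polyXn ?size_polyX // lead_coefXn.
Qed.

Lemma size_r1 : size r1 = 5%N.
Proof. by rewrite /r1 size_polyDl ?size_polyXn ?size_polyX. Qed.

Lemma pi_monic m : pi m \is monic.
Proof. by rewrite /pi monicMl ?monicXn ?monic_exp ?r1_monic. Qed.

Lemma size_pi m : size (pi m) = m.+1.
Proof.
have h0 : r1 ^+ (m %/ 4) != 0 by apply: monic_neq0; apply: monic_exp; exact: r1_monic.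
rewrite /pi size_Mmonic // ?monicXn // size_polyXn.
have := size_exp r1 (m %/ 4); rewrite size_r1 /=.
have : size (r1 ^+ (m %/ 4)) != 0%N.
  by rewrite size_poly_eq0 monic_neq0 ?monic_exp ?r1_monic.
case: (size _) => //= s _ ->.
have := divn_eq m 4; have : (m %% 4 < 4)%N by rewrite ltn_mod.
lia.
Qed.

Lemma pi_eq j r : (r < 4)%N -> pi (4 * j + r) = r1 ^+ j * 'X^r.
Proof.
move=> r4; rewrite /pi.
have -> : ((4 * j + r) %/ 4 = j)%N by lia.
by have -> : ((4 * j + r) %% 4 = r)%N by lia.
Qed.

Lemma pi_step j r : (r < 3)%N -> pi (4 * j + r) * 'X = pi (4 * j + r.+1).
Proof.
move=> r3; rewrite !pi_eq //; last by lia.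
by rewrite -mulrA -exprSr.
Qed.

Lemma two0 : (2%:R : 'F_2) = 0. Proof. by apply/val_inj. Qed.

Lemma pi_step3 j : pi (4 * j + 3) * 'X = pi (4 * j.+1 + 0) + pi (4 * j + 1).
Proof.
rewrite !pi_eq // expr0 mulr1 expr1 [r1 ^+ j.+1]exprSr -mulrA -exprSr -mulrDr.
congr (_ * _); rewrite /r1 -addrA.
have -> : ('X + 'X : {poly 'F_2}) = 0.
  by rewrite -mulr2n -mulr_natl -polyC_natr two0 mul0r.
by rewrite addr0.
Qed.

Lemma F2_cases (x : 'F_2) : x = 0 \/ x = 1.
Proof. by case: x => [[|[|]]] //= ?; [left|right]; apply/val_inj. Qed.

Lemma pow4 (m : nat) (D : 'M['F_2]_m.+1) :
  (forall i : 'I_m.+1, i != ord_max ->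
     (delta_mx 0 i : 'rV_m.+1) *m (D *m D + D + 1%:M) = 0 /\
     ((delta_mx 0 i : 'rV_m.+1) *m D) 0 ord_max = 0) ->
  D ^+ 4 = D.
Proof.
move=> H; set Q := D *m D + D + 1%:M.
have HU : forall x : 'rV_m.+1, x 0 ord_max = 0 -> x *m Q = 0 /\ (x *m D) 0 ord_max = 0.
  move=> x x0; rewrite (row_sum_delta x) !mulmx_suml; split.
    apply: big1 => j _; rewrite -scalemxAl.
    case: (eqVneq j ord_max) => [->|nj]; first by rewrite x0 scale0r.
    by rewrite (H j nj).1 scaler0.
  rewrite summxE big1 // => j _; rewrite -scalemxAl mxE.
  case: (eqVneq j ord_max) => [->|nj]; first by rewrite x0 mul0r.
  by rewrite (H j nj).2 mulr0.
have pX : ('X^4 - 'X : {poly 'F_2}) = ('X * 'X + 'X + 1) * ('X - 1) * 'X.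
  by ring.
have hQ : horner_mx D ('X * 'X + 'X + 1) = Q.
  by rewrite !rmorphD rmorphM /= horner_mx_X rmorph1 /Q -mulmxE.
have e4 : D ^+ 4 - D = horner_mx D ('X^4 - 'X).
  by rewrite rmorphB rmorphXn /= horner_mx_X.
have f1 : D ^+ 4 - D = Q *m (D - 1%:M) *m D.
  by rewrite e4 pX !hmxM hQ rmorphB /= horner_mx_X rmorph1.
have f2 : D ^+ 4 - D = D *m Q *m (D - 1%:M).
  by rewrite e4 pX mulrC mulrA !hmxM hQ rmorphB /= horner_mx_X rmorph1.
have f3 : D ^+ 4 - D = (D - 1%:M) *m Q *m D.
  by rewrite e4 pX [_ * ('X - 1)]mulrC !hmxM hQ rmorphB /= horner_mx_X rmorph1.
apply/eqP; rewrite -subr_eq0; apply/eqP/row_matrixP => i.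
rewrite row0 rowE.
case: (eqVneq i ord_max) => [ei|ni]; last first.
  by rewrite f1 !mulmxA (H i ni).1 !mul0mx.
have x1 : (delta_mx 0 i : 'rV['F_2]_m.+1) 0 ord_max = 1 by rewrite ei mxE !eqxx.
case: (F2_cases (((delta_mx 0 i : 'rV['F_2]_m.+1) *m D) 0 ord_max)) => c.
  by rewrite f2 !mulmxA (HU _ c).1 mul0mx.
have : (((delta_mx 0 i : 'rV['F_2]_m.+1) *m D - delta_mx 0 i) 0 ord_max = 0).
  by rewrite mxE [X in _ + X = _]mxE c x1 subrr.
move/HU => [hq _].
by rewrite f3 !mulmxA mulmxBr mulmx1 hq mul0mx.
Qed.

Section Main.
Variable k : nat.
Local Notation n := (4 * k)%N.

Lemma pi_indep (c : 'rV['F_2]_n.+1) : \sum_(i < n.+1) c 0 i *: pi i = 0 -> c = 0.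
Proof.
move=> H.
have step : forall i0 : 'I_n.+1, (forall l : 'I_n.+1, (i0 < l)%N -> c 0 l = 0) -> c 0 i0 = 0.
  move=> i0 Hl; have := congr1 (fun p : {poly 'F_2} => p`_i0) H.
  rewrite coef_sum coef0 (bigD1 i0) //= big1 ?addr0 => [|l nl].
    rewrite coefZ.
    have : (pi i0)`_i0 = 1.
      by have := pi_monic i0; rewrite monicE lead_coefE size_pi /= => /eqP.
    by move=> ->; rewrite mulr1.
  rewrite coefZ; case: (ltngtP i0 l) => [lt|gt|eq].
  - by rewrite Hl // mul0r.
  - by rewrite nth_default ?mulr0 // size_pi.
  - by move: nl; rewrite (_ : l = i0) ?eqxx //; apply/val_inj.
have key : forall d (i : 'I_n.+1), (n - i <= d)%N -> c 0 i = 0.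
  elim=> [|d IH] i hi; apply: step => l il.
    by have := ltn_ord l; lia.
  by apply: IH; have := ltn_ord l; lia.
apply/rowP => i; rewrite [RHS]mxE; apply: (key n); exact: leq_subr.
Qed.


Definition w (B : 'M['F_2]_n.+1) (v : 'rV_n.+1) (m : nat) := v *m horner_mx B (pi m).
Definition P (B : 'M['F_2]_n.+1) (v : 'rV_n.+1) : 'M_n.+1 := \matrix_(i < n.+1) w B v i.

Lemma P_unit (B : 'M['F_2]_n.+1) v a : a != 0 -> annP B v a -> (n.+1 < size a)%N ->
  P B v \in unitmx.
Proof.
move=> a0 Ha sa.
rewrite -row_free_unit -kermx_eq0; apply/rowV0P => c /sub_kermxP cP.
set q := \sum_(i < n.+1) c 0 i *: pi i.
have cq : c *m P B v = v *m horner_mx B q.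
  rewrite mulmx_sum_row rmorph_sum mulmx_sumr; apply: eq_bigr => i _.
  by rewrite rowK /w -mul_polyC /= (hmxM B ((c 0 i)%:P)) horner_mx_C mul_scalar_mx scalemxAr.
have sq : (size q <= n.+1)%N.
  apply/leq_sizeP => j hj; rewrite coef_sum big1 // => i _.
  by rewrite coefZ nth_default ?mulr0 // size_pi (leq_trans _ hj).
have q0 : q = 0.
  apply/eqP; apply: contraLR sa => q0; rewrite -leqNgt (leq_trans _ sq) //.
  apply: dvdp_leq => //; rewrite -Ha -cq cP //.
exact: pi_indep.
Qed.

End Main.

Section Big.
Variable k : nat.
Local Notation n := (4 * k)%N.

Definition E (m : nat) : 'rV['F_2]_n.+1 := delta_mx 0 (inord m).
Definition Emb (b : nat) : 'M['F_2]_(5, n.+1) := \matrix_(i < 5) E (b + i).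
Definition rowD (m : nat) := e5 (m %% 4) *m D5 *m Emb (4 * (m %/ 4)).
Definition rowN (m : nat) := e5 (m %% 4) *m N5 *m Emb (4 * (m %/ 4)).
Definition Dm (a : 'rV['F_2]_n.+1) : 'M['F_2]_n.+1 :=
  \matrix_(i < n.+1) (if (i < n)%N then rowD i else a).
Definition Nm : 'M['F_2]_n.+1 := \matrix_(i < n.+1) (if (i < n)%N then rowN i else 0).

Lemma eE (i : 'I_n.+1) : delta_mx 0 i = E i.
Proof. by rewrite /E inord_val. Qed.

Lemma e5Emb b (l : nat) : (l < 5)%N -> e5 l *m Emb b = E (b + l).
Proof.
move=> l5; have := e5E (Ordinal l5); rewrite /= => ->.
by rewrite -rowE rowK.
Qed.

Lemma E_split (i : nat) : E i = e5 (i %% 4) *m Emb (4 * (i %/ 4)).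
Proof.
rewrite e5Emb; last by have := ltn_pmod i (isT : (0 < 4)%N); lia.
by congr E; have := divn_eq i 4; lia.
Qed.

Lemma E_Dm a (m : nat) : (m <= n)%N -> E m *m Dm a = if (m < n)%N then rowD m else a.
Proof. by move=> mn; rewrite /E -rowE rowK inordK. Qed.

Lemma E_Nm (m : nat) : (m <= n)%N -> E m *m Nm = if (m < n)%N then rowN m else 0.
Proof. by move=> mn; rewrite /E -rowE rowK inordK. Qed.

Lemma modE j l : (l < 4)%N -> ((4 * j + l) %% 4 = l)%N.
Proof. lia. Qed.
Lemma divE j l : (l < 4)%N -> ((4 * j + l) %/ 4 = j)%N.
Proof. lia. Qed.

Lemma EmbN j : (j < k)%N -> Emb (4 * j) *m Nm = N5 *m Emb (4 * j).
Proof.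
move=> jk; apply/row_matrixP => l; rewrite !row_mul rowK.
rewrite rowE -e5E.
case: (ltnP l 4) => l4.
  rewrite E_Nm; last by have := ltn_ord l; lia.
  rewrite ifT; last by lia.
  by rewrite /rowN modE // divE.
have -> : (l : nat) = 4 by have := ltn_ord l; lia.
rewrite e54N mul0mx E_Nm; last by lia.
case: ifP => // _; rewrite /rowN.
have -> : ((4 * j + 4) %% 4 = 0)%N by lia.
by rewrite e50N !mul0mx.
Qed.

Lemma EmbD a j : (j < k)%N -> I5 *m Emb (4 * j) *m Dm a = D5 *m Emb (4 * j).
Proof.
move=> jk; apply/row_matrixP => l; rewrite !row_mul.
rewrite !rowE -e5E.
case: (ltnP l 4) => l4.
  rewrite e5I5 // e5Emb // E_Dm; last by have := ltn_ord l; lia.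
  rewrite ifT; last by lia.
  by rewrite /rowD modE // divE.
have -> : (l : nat) = 4 by have := ltn_ord l; lia.
by rewrite e54I e54D !mul0mx.
Qed.


Lemma Xcol b : (b + 4 <= n)%N -> forall l : 'I_5, (I5 *m Emb b) l ord_max = 0.
Proof.
move=> bn l; rewrite mxE; apply: big1 => p _; rewrite !mxE.
case: (ltnP p 4) => p4.
  have -> : (ord_max == inord (b + p) :> 'I_n.+1) = false.
    apply/negbTE; rewrite -val_eqE /= inordK; lia.
  by rewrite andbF mulr0.
have p4e : (p : nat) = 4 by have := ltn_ord p; lia.
rewrite /ico p4e; case: eqP => [->|_] /=; by rewrite mul0r.
Qed.

Lemma E_blk (m : nat) : (m < n)%N ->
  E m = e5 (m %% 4) *m (I5 *m Emb (4 * (m %/ 4))).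
Proof.
move=> mn; rewrite mulmxA e5I5 -?E_split //.
by have := ltn_pmod m (isT : (0 < 4)%N).
Qed.

Lemma DmQ a (m : nat) : (m < n)%N ->
  E m *m (Dm a *m Dm a + Dm a + 1%:M) = 0 /\ (E m *m Dm a) 0 ord_max = 0.
Proof.
move=> mn; have jk : (m %/ 4 < k)%N by lia.
have r4 : (m %% 4 < 4)%N by have := ltn_pmod m (isT : (0 < 4)%N).
set X := I5 *m Emb (4 * (m %/ 4)).
have XD : X *m Dm a = D5 *m X by rewrite EmbD // /X mulmxA DI5.
split.
  have XQ : X *m (Dm a *m Dm a + Dm a + 1%:M) = (D5 *m D5 + D5 + 1%:M) *m X.
    by rewrite !mulmxDr !mulmxDl mulmxA XD -mulmxA XD mulmxA mulmx1 mul1mx.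
  rewrite E_blk // -/X -mulmxA XQ mulmxA -(e5I5 r4) -(mulmxA _ I5) D5q.
  by rewrite mulmx0 mul0mx.
rewrite E_Dm ?ifT ?(ltnW mn) // /rowD -DI5 mulmxA -(mulmxA _ I5) -/X.
rewrite mxE big1 // => l _; rewrite Xcol ?mulr0 //; lia.
Qed.

Lemma Dm4 a : Dm a ^+ 4 = Dm a.
Proof.
apply: pow4 => i ni; rewrite eE; apply: DmQ.
by have := ltn_ord i; move: ni; rewrite -val_eqE /=; lia.
Qed.

Lemma Nm2 : Nm *m Nm = 0.
Proof.
apply/row_matrixP => i; rewrite row0 rowE eE mulmxA.
case: (ltnP i n) => hi.
  have jk : (i %/ 4 < k)%N by lia.
  rewrite E_split -(mulmxA (e5 _)) (EmbN jk) mulmxA -(mulmxA (e5 _ *m N5)).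
  rewrite (EmbN jk) mulmxA -(mulmxA (e5 _)) N5sq.
  by rewrite mulmx0 mul0mx.
by rewrite E_Nm ?ifF ?mul0mx //; [lia | have := ltn_ord i; lia].
Qed.

Lemma E_P (B : 'M['F_2]_n.+1) (v : 'rV['F_2]_n.+1) (m : nat) : (m <= n)%N -> E m *m P B v = w B v m.
Proof. by move=> mn; rewrite /E -rowE rowK inordK. Qed.

Lemma EmbP (B : 'M['F_2]_n.+1) (v : 'rV['F_2]_n.+1) j (l : nat) : (j < k)%N -> (l < 5)%N ->
  e5 l *m (Emb (4 * j) *m P B v) = w B v (4 * j + l).
Proof. by move=> jk l5; rewrite mulmxA e5Emb // E_P //; lia. Qed.

Lemma wX (B : 'M['F_2]_n.+1) (v : 'rV['F_2]_n.+1) m : w B v m *m B = v *m horner_mx B (pi m * 'X).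
Proof. by rewrite /w (hmxM B (pi m) 'X) horner_mx_X mulmxA. Qed.

Lemma relation (B : 'M['F_2]_n.+1) (v : 'rV['F_2]_n.+1) : P B v \in unitmx ->
  P B v *m B = (Nm + Dm ((w B v n *m B) *m invmx (P B v))) *m P B v.
Proof.
move=> Pu; apply/row_matrixP => i.
rewrite row_mul rowK [RHS]row_mul rowE eE mulmxDr mulmxDl.
case: (ltnP i n) => hi; last first.
  have ein : (i : nat) = n by have := ltn_ord i; lia.
  rewrite E_Nm ?E_Dm ?ifF ?mul0mx ?add0r ?mulmxKV ?ein //; lia.
rewrite E_Nm ?E_Dm ?ifT ?(ltnW hi) // /rowN /rowD.
have [j [r [r4 ei]]] : exists j r, (r < 4)%N /\ (i : nat) = (4 * j + r)%N.
  exists (i %/ 4)%N, (i %% 4)%N; split; first by have := ltn_pmod i (isT : (0 < 4)%N).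
  by have := divn_eq i 4; lia.
have jk : (j < k)%N by lia.
have -> : (i %% 4)%N = r by rewrite ei modE.
have -> : (i %/ 4)%N = j by rewrite ei divE.
rewrite -mulmxDl -mulmxDl -mulmxDr M5E -mulmxA wX ei.
clear ei; case: r r4 => [|[|[|[|r]]]] // _.
- by rewrite eM0 EmbP // pi_step.
- by rewrite eM1 EmbP // pi_step.
- by rewrite eM2 EmbP // pi_step.
- rewrite eM3 mulmxDl !EmbP // pi_step3 rmorphD /= mulmxDr addrC.
  by rewrite /w addn0; congr (_ + _); congr (_ *m horner_mx _ (pi _)); lia.
Qed.

End Big.

Lemma conjX (F : fieldType) m (Q X : 'M[F]_m.+1) e : Q \in unitmx ->
  (invmx Q *m X *m Q) ^+ e.+1 = invmx Q *m X ^+ e.+1 *m Q.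
Proof.
move=> Qu; elim: e => [|e IH]; first by rewrite !expr1.
rewrite exprS IH [X ^+ e.+2]exprS -!mulmxE !mulmxA mulmxK //.
Qed.

Unset Implicit Arguments.

Theorem corollary2p10 (k : nat) (hk : (1 <= k)%N) (B : 'M['F_2]_((4 * k).+1)) :
  non_derogative B ->
  exists N D : 'M['F_2]_((4 * k).+1),
    B = N + D /\ N ^+ 2 = 0 /\ D ^+ 4 = D.
Proof.
move=> nd.
have [v [a [a0 Ha ha]]] := ann_all B.
have sa : ((4 * k).+1 < size a)%N.
  have := dvdp_leq a0 (mxminpoly_min ha).
  by rewrite nd size_char_poly.
have Pu := P_unit a0 Ha sa.
set Q := P B v.
set a' := (w B v (4 * k) *m B) *m invmx Q.
have rel : Q *m B = (Nm k + Dm a') *m Q by apply: relation.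
exists (invmx Q *m Nm k *m Q), (invmx Q *m Dm a' *m Q); split; [|split].
- by rewrite -mulmxDl -mulmxDr -mulmxA -rel mulKmx.
- by rewrite (@conjX _ _ _ _ 1 Pu) expr2 -mulmxE Nm2 mulmx0 mul0mx.
- by rewrite (@conjX _ _ _ _ 3 Pu) Dm4.
Qed.
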